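(* Let $m$ be a positive integer and let $\mathcal Z$ be a three-class symmetric association scheme with adjacency matrices $A_0=I,A_1,A_2,A_3$ whose character table is $$P=\begin{bmatrix}1&m(m-1)&m(m+1)&(m-1)(m+1)\\1&m&0&-m-1\\1&0&-m&m-1\\1&-m&m&-1\end{bmatrix}.$$ Then $A_1$, $A_2$ and $A_3+A_0$ are incidence matrices of symmetric partial geometric designs with parameters $(v,k;\alpha,\beta)$ respectively $$\big(3m^2,\ m(m-1);\ \tfrac13m^2(m^2-3m+2),\ \tfrac13m^2(m^2-3m+5)\big),$$ $$\big(3m^2,\ m(m+1);\ \tfrac13m^2(m^2+3m+2),\ \tfrac13m^2(m^2+3m+5)\big),$$ $$\big(3m^2,\ m^2;\ \tfrac13m^2(m^2-1),\ \tfrac13m^2(m^2+2)\big).$$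
   Context: A three-class symmetric association scheme has symmetric $0/1$ adjacency matrices $A_0=I,A_1,A_2,A_3$ summing to the all-ones matrix $J$ with $A_iA_j=\sum_hp_{ij}^hA_h$. Its character table is the matrix $P$ with $P_{ij}=p_j(i)$, where $A_j=\sum_i p_j(i)E_i$ and $E_0=\frac1{|X|}J,E_1,E_2,E_3$ are the primitive idempotents of the Bose–Mesner algebra. A symmetric partial geometric design with parameters $(v,k;\alpha,\beta)$ is a design with $v$ points and $v$ blocks, each block of size $k$, each point in $k$ blocks, whose incidence matrix $N$ satisfies $NN^TN=\beta N+\alpha(J-N)$. *)

(* Defs.v *)
From HB Require Import structures.
From mathcomp Require Import all_boot all_order all_algebra all_field.
Set Implicit Arguments. Unset Strict Implicit. Unset Printing Implicit Defensive.
Import Order.TTheory GRing.Theory Num.Theory.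
Local Open Scope ring_scope.

Definition Jmx (n : nat) : 'M[algC]_n := const_mx 1.

Definition zero_one_mx (n : nat) (M : 'M[algC]_n) : Prop :=
  forall i j, M i j = 0 \/ M i j = 1.

Definition sym_assoc_scheme (n d : nat) (A : 'I_d.+1 -> 'M[algC]_n) : Prop :=
  [/\ A ord0 = 1%:M,
      forall i, zero_one_mx (A i),
      forall i, A i != 0,
      forall i, (A i)^T = A i
    & \sum_i A i = Jmx n] /\
  (forall i j, exists p : 'I_d.+1 -> nat,
        A i *m A j = \sum_h (p h)%:R *: A h).

Definition character_table (n d : nat) (A : 'I_d.+1 -> 'M[algC]_n)
    (P : 'M[algC]_d.+1) : Prop :=
  exists E : 'I_d.+1 -> 'M[algC]_n,
  [/\ E ord0 = (n%:R)^-1 *: Jmx n,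
      forall i j, E i *m E j = if i == j then E i else 0,
      forall i, E i != 0,
      \sum_i E i = 1%:M
    & forall i, exists c : 'I_d.+1 -> algC, E i = \sum_j c j *: A j] /\
  (forall j, A j = \sum_i P i j *: E i).

Definition sym_partial_geometric_design (n : nat) (N : 'M[algC]_n)
    (v k : nat) (alpha beta : algC) : Prop :=
  [/\ n = v,
      zero_one_mx N,
      forall i, \sum_j N i j = k%:R,
      forall j, \sum_i N i j = k%:R
    & N *m N^T *m N = beta *: N + alpha *: (Jmx n - N)].

Definition P_m (m : nat) : 'M[algC]_4 :=
  let M : algC := m%:R in
  \matrix_(i < 4, j < 4) (nth [::]
    [:: [:: 1; M * (M - 1); M * (M + 1); (M - 1) * (M + 1)];
        [:: 1; M; 0; - M - 1];
        [:: 1; 0; - M; M - 1];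
        [:: 1; - M; M; -1]] i)`_j.

(* Main.v *)
Require Import Defs.
From HB Require Import structures.
From mathcomp Require Import all_boot all_order all_algebra all_field.
From mathcomp Require Import ring.
Import Order.TTheory GRing.Theory Num.Theory.
Local Open Scope ring_scope.

Section S.
Variables (n : nat) (E : 'I_4 -> 'M[algC]_n).
Hypothesis Eorth : forall i j, E i *m E j = if i == j then E i else 0.
Definition SS (c : 'I_4 -> algC) := \sum_i c i *: E i.

Lemma mulSS c d : SS c *m SS d = SS (fun i => c i * d i).
Proof.
rewrite /SS mulmx_suml; apply: eq_bigr => i _.
rewrite mulmx_sumr (bigD1 i) //= big1 => [|j ji].
  by rewrite -scalemxAl -scalemxAr Eorth eqxx scalerA addr0.
by rewrite -scalemxAl -scalemxAr Eorth eq_sym (negbTE ji) !scaler0.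
Qed.

Lemma SS_lin a b c d : a *: SS c + b *: SS d = SS (fun i => a * c i + b * d i).
Proof.
rewrite /SS !scaler_sumr -big_split; apply: eq_bigr => i _.
by rewrite !scalerA scalerDl.
Qed.

Lemma SS_delta a : a *: E ord0 = SS (fun i => if i == ord0 then a else 0).
Proof.
rewrite /SS (bigD1 ord0) //= big1 ?addr0 // => i /negbTE ->; by rewrite scale0r.
Qed.

Lemma design_of (th : 'I_4 -> algC) (N : 'M[algC]_n) v k al be :
  Jmx n = n%:R *: E ord0 -> N = SS th -> N^T = N -> zero_one_mx N -> n = v ->
  th ord0 = k%:R ->
  (forall i, th i * th i * th i =
       be * th i + al * ((if i == ord0 then n%:R else 0) - th i)) ->
  sym_partial_geometric_design N v k al be.
Proof.
move=> HJ HN HT H01 Hv Hk Hpol.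
have JS : Jmx n = SS (fun i => if i == ord0 then n%:R else 0) by rewrite HJ SS_delta.
have NJ : N *m Jmx n = k%:R *: Jmx n.
  rewrite HN JS mulSS -[_ *: SS _]addr0 -[X in _ + X](scale0r (SS th)) SS_lin.
  rewrite /SS; apply: eq_bigr => i _; case: eqP => [->|_].
    by rewrite Hk mul0r addr0 mulrC.
  by rewrite mulr0 mul0r addr0 mulr0.
have rows : forall i, \sum_j N i j = k%:R.
  move=> i; have := congr1 (fun M : 'M[algC]_n => M i i) NJ; rewrite !mxE mulr1 => <-.
  by apply: eq_bigr => j _; rewrite mxE mulr1.
split => //.
- move=> j; rewrite -(rows j); apply: eq_bigr => i _.
  by rewrite -{1}HT mxE.
- rewrite HT HN !mulSS.
  have -> : Jmx n - SS th = 1 *: SS (fun i => if i == ord0 then n%:R else 0)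
     + (-1) *: SS th by rewrite JS scale1r scaleN1r.
  rewrite SS_lin SS_lin /SS; apply: eq_bigr => i _; rewrite Hpol; congr (_ *: _).
  by rewrite mul1r mulN1r.
Qed.
End S.

Lemma P_rowsum m (i : 'I_4) : \sum_j P_m m i j = if i == ord0 then 3 * (m%:R)^+2 else 0.
Proof.
rewrite !big_ord_recr big_ord0 /= /P_m !mxE.
case: i => [[|[|[|[|?]]]] Hi] //=; rewrite ?mxE /=; ring.
Qed.

Theorem theorem5p2 (m : nat) (n : nat) (A : 'I_4 -> 'M[algC]_n) :
  (0 < m)%N ->
  sym_assoc_scheme A ->
  character_table A (P_m m) ->
  let M : algC := m%:R in
  [/\ sym_partial_geometric_design (A 1) (3 * m ^ 2) (m * (m - 1))
        (M ^+ 2 * (M ^+ 2 - 3 * M + 2) / 3) (M ^+ 2 * (M ^+ 2 - 3 * M + 5) / 3),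
      sym_partial_geometric_design (A 2) (3 * m ^ 2) (m * (m + 1))
        (M ^+ 2 * (M ^+ 2 + 3 * M + 2) / 3) (M ^+ 2 * (M ^+ 2 + 3 * M + 5) / 3)
    & sym_partial_geometric_design (A 3 + A 0) (3 * m ^ 2) (m ^ 2)
        (M ^+ 2 * (M ^+ 2 - 1) / 3) (M ^+ 2 * (M ^+ 2 + 2) / 3)].
Proof.
move=> m0 [[A0 A01 Anz AT Asum] _] [E [[E0 Eorth Enz Esum _] AP]] M.
have AS : forall j, A j = @SS n E (fun i => P_m m i j) by move=> j; rewrite AP.
have n0 : n%:R != 0 :> algC.
  apply/negP => /eqP n0; move: (Enz ord0); rewrite E0 n0 invr0 scale0r eqxx //.
have HJ : Jmx n = n%:R *: E ord0 by rewrite E0 scalerA mulfV // scale1r.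
have Hn : n = (3 * m ^ 2)%N.
  have : Jmx n = (3 * M ^+ 2) *: E ord0.
    rewrite -Asum SS_delta /SS.
    under eq_bigr do rewrite AS /SS.
    rewrite exchange_big /=; apply: eq_bigr => i _.
    by rewrite -scaler_suml P_rowsum.
  rewrite HJ => /eqP; rewrite -subr_eq0 -scalerBl scaler_eq0 (negbTE (Enz _)) orbF.
  rewrite subr_eq0 /M -natrX -natrM eqr_nat => /eqP //.
have Hnr : n%:R = 3 * M ^+ 2 :> algC by rewrite Hn natrM natrX.
have three : (3 : algC) != 0 by rewrite pnatr_eq0.
split.
- apply: (@design_of _ _ Eorth _ _ _ _ _ _ HJ (AS 1)) => //.
  + by rewrite /P_m mxE /= natrM natrB.
  + case=> [[|[|[|[|?]]]] Hi] //=; rewrite /P_m ?mxE /= ?Hnr; by field.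
- apply: (@design_of _ _ Eorth _ _ _ _ _ _ HJ (AS 2)) => //.
  + by rewrite /P_m mxE /= natrM natrD.
  + case=> [[|[|[|[|?]]]] Hi] //=; rewrite /P_m ?mxE /= ?Hnr; by field.
- apply: (@design_of _ _ Eorth (fun i => P_m m i 3 + P_m m i 0) _ _ _ _ _ HJ).
  + by rewrite !AS /SS -big_split; apply: eq_bigr => i _; rewrite scalerDl.
  + by rewrite linearD /= !AT.
  + move=> a b.
    pose cf (j : 'I_4) : nat := (A j a b == 1).
    have hc : forall j, A j a b = (cf j)%:R.
      by move=> j; rewrite /cf; case: (A01 j a b) => ->; rewrite ?eqxx // eq_sym oner_eq0.
    have := congr1 (fun X : 'M[algC]_n => X a b) Asum.
    rewrite /Jmx mxE summxE.
    under eq_bigr do rewrite hc.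
    move=> hs0; have : (\sum_i cf i)%:R == 1%:R :> algC by rewrite natr_sum hs0.
    rewrite eqr_nat => /eqP.
    rewrite (bigD1 (3:'I_4)) //= (bigD1 (0:'I_4)) //= => hs.
    rewrite mxE !hc -natrD.
    have : (cf 3%R + cf 0%R <= 1)%N by rewrite -[X in (_ <= X)%N]hs addnA leq_addr.
    case: (cf 3%R + cf 0%R)%N => [|[|k]] // _; by [left | right].
  + exact: Hn.
  + by rewrite /P_m !mxE /= natrX; ring.
  + case=> [[|[|[|[|?]]]] Hi] //=; rewrite /P_m ?mxE /= ?Hnr; by field.
Qed.
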